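(* Let $q\ge1$ and let $A=(a_{ijk})_{i,j\le n,k\le m}$ be a real array. Then $\mathbb{E}\varphi_A(E_n)\le C(q)\sqrt{W_A}$, where $C(q)$ depends only on $q$.
   Context: $E_n=(\mathcal E_1,\dots,\mathcal E_n)$ has i.i.d. standard symmetric exponential coordinates. $W_A=\big(\sum_k(\sum_{i,j}a_{ijk}^2)^{q/2}\big)^{1/q}$ and $\varphi_A(x)=\Big(\sum_k\Big(\sum_i\frac{(\sum_ja_{ijk}x_j)^4}{\sum_ja_{ijk}^2}\Big)^{q/2}\Big)^{1/(2q)}$ for $x\in\mathbb{R}^n$, terms with $\sum_ja_{ijk}^2=0$ being omitted. *)

(* Defs.v *)
From HB Require Import structures.
From mathcomp Require Import all_boot all_order all_algebra.
From mathcomp Require Import all_classical all_reals all_analysis.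
Set Implicit Arguments. Unset Strict Implicit. Unset Printing Implicit Defensive.
Import Order.TTheory GRing.Theory Num.Theory.
Local Open Scope ring_scope.

Section Defs.
Variable R : realType.

Definition sexp_density (t : R) : R := expR (- `|t|) / 2.

Definition ncons (t : R) (x : nat -> R) : nat -> R :=
  fun k => if k is k'.+1 then x k' else t.

(* E f(E_1,...,E_n) for i.i.d. symmetric exponential E_i, as iterated
   Lebesgue integrals against the product density (f nonnegative here);
   only the first n coordinates of the argument are relevant. *)
Fixpoint sexp_expect (n : nat) (f : (nat -> R) -> \bar R) : \bar R :=
  match n with
  | 0 => f (fun _ => 0)
  | n'.+1 => (\int[@lebesgue_measure R]_t
               ((sexp_density t)%:E * sexp_expect n' (fun x => f (ncons t x))))%E
  end.

Definition W_A (n m : nat) (q : R) (A : 'I_n -> 'I_n -> 'I_m -> R) : R :=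
  (\sum_(k < m) (\sum_(i < n) \sum_(j < n) A i j k ^+ 2) `^ (q / 2)) `^ (q^-1).

Definition phi_A (n m : nat) (q : R) (A : 'I_n -> 'I_n -> 'I_m -> R)
  (x : 'I_n -> R) : R :=
  (\sum_(k < m)
     (\sum_(i < n | (\sum_(j < n) A i j k ^+ 2) != 0)
        ((\sum_(j < n) A i j k * x j) ^+ 4 / \sum_(j < n) A i j k ^+ 2))
       `^ (q / 2)) `^ ((2 * q)^-1).

End Defs.

(* Main.v *)
Require Import Defs.
From HB Require Import structures.
From mathcomp Require Import all_boot all_order all_algebra.
From mathcomp Require Import all_classical all_reals all_analysis.
From mathcomp Require Import measurable_realfun.
From mathcomp Require Import ring lra zify.
Import Order.TTheory GRing.Theory Num.Theory.
Local Open Scope ring_scope.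

Section S.
Variable R : realType.
Local Notation mu := (@lebesgue_measure R).

Lemma mF (c : R) : measurable_fun setT (fun t : R => sexp_density t * expR (c * t)).
Proof.
apply: measurable_funM.
  apply: measurable_funM => //.
  apply: measurableT_comp; first exact: measurable_expR.
  apply: measurableT_comp => //.
apply: measurableT_comp; first exact: measurable_expR.
exact: measurable_funM.
Qed.

Lemma dens_ge0 (t : R) : 0 <= sexp_density t.
Proof. by rewrite /sexp_density divr_ge0 ?expR_ge0. Qed.

Lemma half_line (a : R) : a < 1 ->
  (\int[mu]_(t in `[0%R, +oo[) (sexp_density t * expR (a * t))%:E
     <= ((2 * (1 - a))^-1)%:E)%E.
Proof.
move=> a1; have ra : 0 < 1 - a by rewrite subr_gt0.
rewrite (@eq_integral _ _ _ mu _ (fun t => ((2*(1-a))^-1)%:E * (exponential_pdf (1-a) t)%:E)%E); last first.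
  move=> t; rewrite inE /= in_itv /= andbT => t0.
  rewrite -EFinM exponential_pdfE //; congr EFin.
  rewrite /sexp_density ger0_norm // mulrC mulrA -expRD.
  have -> : a * t + - t = - (1 - a) * t by ring.
  by field; rewrite gt_eqF.
rewrite ge0_integralZl_EFin //=; last 3 first.
- by move=> t _; rewrite lee_fin exponential_pdf_ge0 // ltW.
- apply/measurable_EFinP; apply: measurable_funTS; exact: measurable_exponential_pdf.
- by rewrite invr_ge0 mulr_ge0 // ltW.
rewrite -[leRHS]mule1 lee_pmul2l //; last by rewrite lte_fin invr_gt0 mulr_gt0.
rewrite -(integral_exponential_pdf ra).
apply: ge0_subset_integral => //.
- apply/measurable_EFinP; exact: measurable_exponential_pdf.
- by move=> t _; rewrite lee_fin exponential_pdf_ge0 // ltW.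
Qed.


Lemma full_line (c : R) : c ^+ 2 <= 4^-1 ->
  (\int[mu]_t (sexp_density t * expR (c * t))%:E <= (expR (2 * c ^+ 2))%:E)%E.
Proof.
move=> hc.
have c1 : c < 1 by nra.
have c2 : - c < 1 by nra.
have mFE : forall c' (D : set R), measurable_fun D (fun t => (sexp_density t * expR (c' * t))%:E).
  move=> c' D; apply/measurable_EFinP; apply: measurable_funTS; exact: mF.
have F0 : forall c' (t : R), (0 <= (sexp_density t * expR (c' * t))%:E)%E.
  by move=> c' t; rewrite lee_fin mulr_ge0 ?dens_ge0 ?expR_ge0.
rewrite -(setUv `[0%R, +oo[%classic) ge0_integral_setU //=; last 3 first.
all: try (by move=> t _; exact: F0); try exact: measurableC; try exact/disj_setPCl; try exact: mFE.
have neg : (\int[mu]_(t in ~` `[0%R, +oo[%classic) (sexp_density t * expR (c * t))%:E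
   <= \int[mu]_(t in `[0%R, +oo[) (sexp_density t * expR (- c * t))%:E)%E.
  apply: (@le_trans _ _ (\int[mu]_(t in `]-oo, 0%R]) (sexp_density t * expR (c * t))%:E)%E).
    apply: ge0_subset_integral => //; try exact: measurableC; try exact: mFE; try (by move=> t _; exact: F0).
    move=> t /=; rewrite in_itv /= andbT => /negP; rewrite -ltNge => t0.
      by rewrite in_itv /= ltW.
  rewrite (ge0_integration_by_substitution0 (f := fun t => (sexp_density t * expR (- c * t))%:E)).
  - rewrite le_eqVlt; apply/orP; left; apply/eqP; apply: eq_integral => t _.
    by rewrite /sexp_density normrN mulNr mulrN opprK.
  - exact: mFE.
  - by move=> t; exact: F0.
apply: (le_trans (leeD (half_line _ c1) (le_trans neg (half_line _ c2)))).
rewrite -EFinD lee_fin.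
have -> : (2 * (1 - c))^-1 + (2 * (1 - - c))^-1 = (1 - c ^+ 2)^-1.
  by field; rewrite ?subr_eq0 ?gt_eqF ?lt_eqF; try nra.
apply: le_trans (expR_ge1Dx _).
rewrite -div1r ler_pdivrMr; last by nra.
nra.
Qed.

Lemma intZ (k c0 : R) : 0 <= k ->
  (\int[mu]_t (k * (sexp_density t * expR (c0 * t)))%:E
   = k%:E * \int[mu]_t (sexp_density t * expR (c0 * t))%:E)%E.
Proof.
move=> k0; under eq_integral do rewrite EFinM.
rewrite ge0_integralZl_EFin //.
- by move=> t _; rewrite lee_fin mulr_ge0 ?dens_ge0 ?expR_ge0.
- apply/measurable_EFinP; exact: mF.
Qed.

Lemma intZ_le (k c0 : R) : 0 <= k -> c0 ^+ 2 <= 4^-1 ->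
  (\int[mu]_t (k * (sexp_density t * expR (c0 * t)))%:E
   <= (k * expR (2 * c0 ^+ 2))%:E)%E.
Proof.
move=> k0 hc; rewrite intZ // EFinM; apply: lee_wpmul2l; first by rewrite lee_fin.
exact: full_line.
Qed.

Lemma int_mono (f g : R -> \bar R) : (forall x, (0 <= f x)%E) -> (forall x, (f x <= g x)%E) ->
  (\int[mu]_x f x <= \int[mu]_x g x)%E.
Proof.
move=> f0 fg.
rewrite !ge0_integralTE //; last by move=> x; exact: le_trans (f0 x) (fg x).
apply: ereal_sup_le => _ [h hf <-]; exists h => //= x.
exact: le_trans (hf x) (fg x).
Qed.

Lemma sexp_ge0 n (f : (nat -> R) -> \bar R) : (forall x, (0 <= f x)%E) ->
  (0 <= sexp_expect n f)%E.
Proof.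
elim: n f => [|n IH] f f0 /=; first exact: f0.
apply: integral_ge0 => t _; apply: mule_ge0; first by rewrite lee_fin dens_ge0.
exact: IH.
Qed.

Lemma sexp_mono n (f g : (nat -> R) -> \bar R) : (forall x, (0 <= f x)%E) ->
  (forall x, (f x <= g x)%E) -> (sexp_expect n f <= sexp_expect n g)%E.
Proof.
elim: n f g => [|n IH] f g f0 fg /=; first exact: fg.
apply: int_mono => t.
  by apply: mule_ge0; [rewrite lee_fin dens_ge0 | exact: sexp_ge0].
by apply: lee_wpmul2l; [rewrite lee_fin dens_ge0 | exact: IH].
Qed.

Lemma sexp_bound (I : finType) n (a : R) (b : I -> R) (c : I -> nat -> R) :
  0 <= a -> (forall l, 0 <= b l) -> (forall l j, c l j ^+ 2 <= 4^-1) ->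
  (sexp_expect n (fun x => (a + \sum_l b l * expR (\sum_(j < n) c l j * x j))%:E)
    <= (a + \sum_l b l * expR (2 * \sum_(j < n) c l j ^+ 2))%:E)%E.
Proof.
move=> a0; elim: n b c => [|n IH] b c b0 hc.
  rewrite /= lee_fin lerD2l; apply: ler_sum => l _.
  by rewrite !big_ord0 mulr0.
rewrite /=.
pose b' t l := b l * expR (c l 0%N * t).
pose c' l j := c l j.+1.
have eqf t : (fun x => (a + \sum_l b l * expR (\sum_(j < n.+1) c l j * Defs.ncons t x j))%:E)
   = (fun x => (a + \sum_l b' t l * expR (\sum_(j < n) c' l j * x j))%:E).
  apply: funext => x; congr EFin; congr (_ + _); apply: eq_bigr => l _.
  rewrite big_ord_recl /= expRD mulrA; congr (_ * _ * expR _).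
under eq_integral do rewrite eqf.
pose K l := expR (2 * \sum_(j < n) c' l j ^+ 2).
apply: (@le_trans _ _ (\int[mu]_t ((a * (sexp_density t * expR (0 * t)))%:E
   + \sum_l ((b l * K l) * (sexp_density t * expR (c l 0%N * t)))%:E))%E).
  apply: int_mono => t.
    by apply: mule_ge0; [rewrite lee_fin dens_ge0 | apply: sexp_ge0 => x; rewrite lee_fin addr_ge0 // sumr_ge0 // => l _; rewrite mulr_ge0 // ?mulr_ge0 ?expR_ge0].
  rewrite sumEFin -EFinD.
  apply: le_trans (lee_wpmul2l _ (IH _ _ _ _)) _.
  - by rewrite lee_fin dens_ge0.
  - by move=> l; rewrite mulr_ge0 ?expR_ge0.
  - by move=> l j; exact: hc.
  rewrite -EFinM lee_fin mul0r expR0 mulr1 mulrDr mulr_sumr.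
  rewrite [a * _]mulrC lerD2l; apply: ler_sum => l _; rewrite /b' /K.
  by rewrite le_eqVlt; apply/orP; left; apply/eqP; ring.
have mk : forall k c0 (D : set R), measurable_fun D (fun t => (k * (sexp_density t * expR (c0 * t)))%:E).
  move=> k c0 D; apply/measurable_EFinP; apply: measurable_funTS.
  apply: measurable_funM => //; exact: mF.
have gk : forall k c0 (t : R), 0 <= k -> (0 <= (k * (sexp_density t * expR (c0 * t)))%:E)%E.
  by move=> k c0 t k0; rewrite lee_fin mulr_ge0 // mulr_ge0 ?dens_ge0 ?expR_ge0.
have bK0 : forall l, 0 <= b l * K l by move=> l; rewrite mulr_ge0 ?expR_ge0.
rewrite ge0_integralD //; last 4 first.
- by move=> t _; exact: gk.
- exact: mk.
- by move=> t _; apply: sume_ge0 => l _; exact: gk.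
- apply: emeasurable_sum => l; exact: mk.
rewrite ge0_integral_sum //; last 2 first.
- by move=> l; exact: mk.
- by move=> l t _; exact: gk.
apply: le_trans.
  apply: leeD; first apply: (intZ_le a 0 a0).
    by rewrite expr0n /= invr_ge0.
  apply: lee_sum => l _; apply: (intZ_le _ _ (bK0 l) (hc l 0%N)).
rewrite sumEFin -EFinD lee_fin expr0n /= mulr0 expR0 mulr1 lerD2l.
apply: ler_sum => l _; rewrite /K /c' big_ord_recl.
under [in leRHS]eq_bigr do rewrite lift0.

rewrite mulrDr expRD le_eqVlt; apply/orP; left; apply/eqP.
rewrite -mulrA; congr (_ * _); exact: mulrC.
Qed.
End S.

Section T.
Variable R : realType.

Lemma powR_le1D (y a b : R) : 0 <= y -> 0 < a -> a <= b -> y `^ a <= 1 + y `^ b.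
Proof.
move=> y0 a0 ab.
have [y1|y1] := leP y 1.
  apply: (@le_trans _ _ 1); last by rewrite lerDl powR_ge0.
  have [->|yp] := eqVneq y 0; first by rewrite powR0 ?gt_eqF.
  have yp' : 0 < y by rewrite lt_neqAle eq_sym yp y0.
  by rewrite -(powRr0 y) ger_powR // ?yp' ?y1 // ltW.
apply: (@le_trans _ _ (y `^ b)); last by rewrite lerDr.
by apply: ler_powR => //; exact: ltW.
Qed.

Lemma tangent (Z m : R) (M : nat) : 0 <= Z -> 0 <= m ->
  m ^+ M.+1 + M.+1%:R * m ^+ M * (Z - m) <= Z ^+ M.+1.
Proof.
move=> Z0 m0; elim: M => [|M IH].
  by rewrite expr0 expr1 mulr1 mul1r addrC subrK.
have k0 : 0 <= M.+1%:R :> R by [].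
have y0 : 0 <= m ^+ M by rewrite exprn_ge0.
move: IH; rewrite (exprS m M.+1) (exprS Z M.+1) (exprS m M) => IH.
have -> : M.+2%:R = M.+1%:R + 1 :> R by rewrite -natr1.
set y := m ^+ M in y0 IH *; set k := M.+1%:R in k0 IH *; set zz := Z ^+ M.+1 in IH *.
have h1 : 0 <= k * y * (Z - m) ^+ 2 by apply: mulr_ge0; [exact: mulr_ge0 | exact: sqr_ge0].
have h2 : Z * (m * y + k * y * (Z - m)) <= Z * zz by rewrite ler_wpM2l.
nra.
Qed.

Lemma jensen n (p Z : 'I_n -> R) (M : nat) : (forall i, 0 <= p i) -> (forall i, 0 <= Z i) ->
  \sum_i p i = 1 -> (\sum_i p i * Z i) ^+ M.+1 <= \sum_i p i * Z i ^+ M.+1.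
Proof.
move=> p0 Z0 p1.
set m := \sum_i p i * Z i.
have m0 : 0 <= m by rewrite sumr_ge0 // => i _; rewrite mulr_ge0.
apply: (@le_trans _ _ (\sum_i p i * (m ^+ M.+1 + M.+1%:R * m ^+ M * (Z i - m)))).
  have e : forall i, p i * (m ^+ M.+1 + M.+1%:R * m ^+ M * (Z i - m))
     = m ^+ M.+1 * p i + (M.+1%:R * m ^+ M * (p i * Z i) - M.+1%:R * m ^+ M * m * p i).
    by move=> i; ring.
  under eq_bigr do rewrite e.
  rewrite big_split /= sumrB -!mulr_sumr p1 !mulr1 -/m subrr addr0.
  by [].
apply: ler_sum => i _; apply: ler_wpM2l => //; exact: tangent.
Qed.

Lemma pow_exp (y : R) (N : nat) : 0 <= y ->
  y ^+ N.+1 <= ((2 * N.+1%:R) ^+ N.+1) * expR (y / 2).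
Proof.
move=> y0.
have N0 : 0 < 2 * N.+1%:R :> R by rewrite mulr_gt0.
have -> : y / 2 = N.+1%:R * (y / (2 * N.+1%:R)).
  by field; rewrite nat1r pnatr_eq0.
rewrite expRM_natl.
have -> : y ^+ N.+1 = (2 * N.+1%:R) ^+ N.+1 * (y / (2 * N.+1%:R)) ^+ N.+1.
  by rewrite -exprMn; congr (_ ^+ _); field; rewrite nat1r pnatr_eq0.
apply: ler_wpM2l; first by rewrite exprn_ge0 // ltW.
apply: lerXn2r; rewrite ?nnegrE ?expR_ge0 //.
  by rewrite divr_ge0 // ltW.
apply: le_trans (expR_ge1Dx _); by rewrite lerDr.
Qed.


Lemma zbound (y w : R) (M : nat) : 0 <= w ->
  (y ^+ 4 / w ^+ 2) ^+ M.+1 <= (2 * (4 * M + 3).+1%:R) ^+ (4 * M + 3).+1 *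
     (expR (y / (2 * Num.sqrt w)) + expR (- (y / (2 * Num.sqrt w)))).
Proof.
move=> w0.
set v := y / (2 * Num.sqrt w).
have e1 : y ^+ 4 / w ^+ 2 = `|2 * v| ^+ 4.
  have -> : 2 * v = y / Num.sqrt w.
    by rewrite /v invfM mulrCA; congr (_ * _); rewrite mulrA mulfV ?mul1r ?pnatr_eq0.
  rewrite -normrX ger0_norm; last by rewrite exprn_even_ge0.
  rewrite expr_div_n; congr (_ / _).
  by rewrite (_ : 4 = 2 * 2)%N // exprM sqr_sqrtr.
rewrite e1 -exprM (_ : (4 * M.+1 = (4 * M + 3).+1)%N); last by lia.
apply: le_trans (pow_exp _ (4 * M + 3) (normr_ge0 (2 * v))) _.
apply: ler_wpM2l; first by rewrite exprn_ge0 // mulr_ge0.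
have -> : `|2 * v| / 2 = `|v|.
  by rewrite normrM ger0_norm // mulrC mulrA mulVf // mul1r.
have [v0|v0] := leP 0 v.
  by rewrite ger0_norm // lerDl expR_ge0.
by rewrite ltr0_norm // lerDr expR_ge0.
Qed.


Lemma perk n (w y : 'I_n -> R) (r : R) (M : nat) :
  0 < r -> r <= M.+1%:R -> (forall i, 0 <= w i) ->
  (\sum_i y i ^+ 4 / w i) `^ r <= (\sum_i w i) `^ r + \sum_i
     ((\sum_i w i) `^ r * w i / \sum_i w i) * ((2 * (4 * M + 3).+1%:R) ^+ (4 * M + 3).+1) *
     (expR (y i / (2 * Num.sqrt (w i))) + expR (- (y i / (2 * Num.sqrt (w i))))).
Proof.
move=> r0 rM w0.
set S := \sum_i w i; set K := (2 * (4 * M + 3).+1%:R) ^+ (4 * M + 3).+1.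
set E := fun i => expR (y i / (2 * Num.sqrt (w i))) + expR (- (y i / (2 * Num.sqrt (w i)))).
have S0 : 0 <= S by rewrite sumr_ge0.
have K0 : 0 <= K by rewrite exprn_ge0 // mulr_ge0.
have E0 : forall i, 0 <= E i by move=> i; rewrite addr_ge0 ?expR_ge0.
have rhs0 : 0 <= \sum_i (S `^ r * w i / S) * K * E i.
  apply: sumr_ge0 => i _; rewrite mulr_ge0 // mulr_ge0 // divr_ge0 // mulr_ge0 //.
  exact: powR_ge0.
have [Sz|Sp] := eqVneq S 0.
  have wz : forall i, w i = 0.
    move=> i; have := @psumr_eq0P R _ xpredT w (fun i _ => w0 i) Sz i isT. by [].
  rewrite big1; last by move=> i _; rewrite wz invr0 mulr0.
  rewrite powR0 ?gt_eqF //; apply: addr_ge0 => //; exact: powR_ge0.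
have Spos : 0 < S by rewrite lt_neqAle eq_sym Sp.
pose p i := w i / S; pose Z i := y i ^+ 4 / w i ^+ 2.
have p0 : forall i, 0 <= p i by move=> i; rewrite divr_ge0.
have Z0 : forall i, 0 <= Z i by move=> i; apply: divr_ge0; [rewrite exprn_even_ge0 | rewrite exprn_ge0].
have m0 : 0 <= \sum_i p i * Z i by rewrite sumr_ge0 // => i _; rewrite mulr_ge0.
have eT : \sum_i y i ^+ 4 / w i = S * \sum_i p i * Z i.
  rewrite mulr_sumr; apply: eq_bigr => i _; rewrite /p /Z.
  have [wi|wi] := eqVneq (w i) 0; first by rewrite wi !mul0r invr0 !mulr0.
  by field; apply/andP.
rewrite eT powRM //.
apply: le_trans (ler_wpM2l (powR_ge0 _ _) (powR_le1D _ _ _ m0 r0 rM)) _.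
rewrite powR_mulrn // mulrDr mulr1 lerD2l.
have p1 : \sum_i p i = 1 by rewrite /p -mulr_suml mulfV.
apply: le_trans (ler_wpM2l (powR_ge0 _ _) (jensen _ _ _ M p0 Z0 p1)) _.
rewrite mulr_sumr; apply: ler_sum => i _.
have -> : S `^ r * w i / S * K * E i = S `^ r * (p i * (K * E i)) by rewrite /p; ring.
apply: ler_wpM2l; first exact: powR_ge0.
apply: ler_wpM2l => //; exact: zbound.
Qed.


Lemma sum3 (m n : nat) (F : ('I_m * 'I_n) * bool -> R) :
  \sum_l F l = \sum_(k < m) \sum_(i < n) (F ((k, i), true) + F ((k, i), false)).
Proof.
transitivity (\sum_(l : ('I_m * 'I_n) * bool) (fun p b => F (p, b)) l.1 l.2).
  by apply: eq_bigr => -[p b].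
rewrite -(pair_bigA _ (fun p b => F (p, b))) /=.
transitivity (\sum_(p : 'I_m * 'I_n) (fun k i => \sum_b F ((k, i), b)) p.1 p.2).
  by apply: eq_bigr => -[k i].
rewrite -(pair_bigA _ (fun k i => \sum_b F ((k, i), b))) /=.
apply: eq_bigr => k _; apply: eq_bigr => i _; by rewrite big_bool.
Qed.

Lemma csq (n : nat) (a : 'I_n -> R) (j : 'I_n) :
  (a j / (2 * Num.sqrt (\sum_j a j ^+ 2))) ^+ 2 <= 4^-1.
Proof.
set w := \sum_j a j ^+ 2.
have w0 : 0 <= w by rewrite sumr_ge0 // => i _; rewrite sqr_ge0.
rewrite expr_div_n exprMn sqr_sqrtr //.
have [->|wp] := eqVneq w 0; first by rewrite mulr0 invr0 mulr0 invr_ge0.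
have wpos : 0 < w by rewrite lt_neqAle eq_sym wp.
have aw : a j ^+ 2 <= w.
  by rewrite /w (bigD1 j) //= lerDl sumr_ge0 // => i _; rewrite sqr_ge0.
rewrite ler_pdivrMr ?mulr_gt0 //.
have -> : 4^-1 * (2 ^+ 2 * w) = w by field.
exact: aw.
Qed.

Lemma csum (n : nat) (a : 'I_n -> R) :
  \sum_j (a j / (2 * Num.sqrt (\sum_j a j ^+ 2))) ^+ 2 <= 4^-1.
Proof.
set w := \sum_j a j ^+ 2.
have w0 : 0 <= w by rewrite sumr_ge0 // => i _; rewrite sqr_ge0.
under eq_bigr do rewrite expr_div_n exprMn sqr_sqrtr //.
rewrite -mulr_suml -/w.
have [->|wp] := eqVneq w 0; first by rewrite mul0r invr_ge0.
have -> : w / (2 ^+ 2 * w) = 4^-1 by field.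
by [].
Qed.


Lemma e1lem (P B a : R) : 0 <= P -> 0 < B -> 0 < a -> a <= 1 ->
  P `^ a <= B `^ a + B `^ a / B * P.
Proof.
move=> P0 B0 a0 a1.
have PB0 : 0 <= P / B by rewrite divr_ge0 // ltW.
have -> : P `^ a = B `^ a * (P / B) `^ a.
  rewrite -powRM; last 2 first; [exact: ltW | exact: PB0 | ]. congr (_ `^ _).
  by rewrite mulrCA mulfV ?gt_eqF // mulr1.
apply: le_trans (ler_wpM2l (powR_ge0 _ _) (powR_le1D _ _ _ PB0 a0 a1)) _.
by rewrite (powRr1 PB0) mulrDr mulr1 lerD2l mulrA mulrAC.
Qed.


Lemma distr4 (u v k e1 e2 : R) : u * (v * k * (e1 + e2)) <= u * v * k * e1 + u * v * k * e2.
Proof. by rewrite le_eqVlt; apply/orP; left; apply/eqP; ring. Qed.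


Lemma sumb (n : nat) (u s K : R) (w : 'I_n -> R) : 0 <= u -> 0 <= s -> 0 <= K ->
  (forall i, 0 <= w i) ->
  \sum_i (u * (s * w i / \sum_i w i) * K + u * (s * w i / \sum_i w i) * K)
    <= 2 * K * u * s.
Proof.
move=> u0 s0 K0 w0.
set W := \sum_i w i.
have -> : \sum_i (u * (s * w i / W) * K + u * (s * w i / W) * K)
    = (2 * K * u * s) * (W / W).
  rewrite [W / W]mulrC {3}/W !mulr_sumr; apply: eq_bigr => i _; ring.
have [->|Wp] := eqVneq W 0; first by rewrite invr0 mulr0 mulr0 !mulr_ge0.
by rewrite mulfV // mulr1.
Qed.

Lemma uBle (B a : R) : 0 <= B -> B `^ a / B * B <= B `^ a.
Proof.
move=> B0; have [->|Bp] := eqVneq B 0; first by rewrite mulr0 powR_ge0.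
by rewrite divfK.
Qed.


Lemma distr5 (b k y : R) : 2 * b + 2 * k * b * y <= (2 + 2 * k * y) * b.
Proof. by rewrite le_eqVlt; apply/orP; left; apply/eqP; ring. Qed.

End T.

Theorem lemma5p2 (R : realType) (q : R) (hq : 1 <= q) :
  exists C : R, forall (n m : nat) (A : 'I_n -> 'I_n -> 'I_m -> R),
    (sexp_expect n (fun x : nat -> R => (phi_A q A (fun i : 'I_n => x (val i)))%:E)
      <= (C * Num.sqrt (W_A q A))%:E)%E.
Proof.
have q0 : 0 < q by apply: lt_le_trans hq.
pose r := q / 2.
have r0 : 0 < r by rewrite /r divr_gt0.
pose M := Num.truncn r.
have rM : r <= M.+1%:R by apply: ltW; exact: truncnS_gt.
pose K : R := (2 * (4 * M + 3).+1%:R) ^+ (4 * M + 3).+1.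
have K0 : 0 <= K by rewrite exprn_ge0 // mulr_ge0.
exists (2 + 2 * K * expR (2 * 4^-1)).
move=> n m A.
pose w k i := \sum_(j < n) A i j k ^+ 2.
have w0 : forall k i, 0 <= w k i by move=> k i; rewrite sumr_ge0 // => j _; rewrite sqr_ge0.
pose S k := \sum_(i < n) w k i.
have S0 : forall k, 0 <= S k by move=> k; rewrite sumr_ge0.
pose B := \sum_(k < m) S k `^ r.
have B0 : 0 <= B by rewrite sumr_ge0 // => k _; exact: powR_ge0.
pose a := (2 * q)^-1.
have a0 : 0 < a by rewrite /a invr_gt0 mulr_gt0.
have a1 : a <= 1 by rewrite /a invf_le1 ?mulr_gt0 //; lra.
have sqW : Num.sqrt (W_A q A) = B `^ a.
  rewrite /W_A -powR12_sqrt; last exact: powR_ge0.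
  by rewrite -powRrM /a invfM [2^-1 * _]mulrC.
pose cf k i (j : nat) := oapp (fun j' : 'I_n => A i j' k / (2 * Num.sqrt (w k i))) 0 (insub j).
have cfE : forall k i (j : 'I_n), cf k i j = A i j k / (2 * Num.sqrt (w k i)).
  by move=> k i j; rewrite /cf valK.
pose c (l : ('I_m * 'I_n) * bool) (j : nat) := (if l.2 then 1 else -1) * cf l.1.1 l.1.2 j.
pose beta (l : ('I_m * 'I_n) * bool) := B `^ a / B * (S l.1.1 `^ r * w l.1.1 l.1.2 / S l.1.1) * K.
have beta0 : forall l, 0 <= beta l.
  move=> l; rewrite /beta mulr_ge0 // mulr_ge0 //.
    by rewrite divr_ge0 // powR_ge0.
  by rewrite divr_ge0 // mulr_ge0 // powR_ge0.
have c2 : forall l j, c l j ^+ 2 <= 4^-1.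
  move=> [[k i] b] j; rewrite /c /cf /= exprMn.
  have -> : (if b then 1 else -1) ^+ 2 = 1 :> R by case: b; rewrite ?sqrrN expr1n.
  rewrite mul1r; case: insubP => [j' _ _|_] /=; last by rewrite expr0n /= invr_ge0.
  exact: (@csq R n (fun j => A i j k) j').
have csum2 : forall l, \sum_(j < n) c l j ^+ 2 <= 4^-1.
  move=> [[k i] b]; rewrite /c /=.
  have -> : \sum_(j < n) ((if b then 1 else -1) * cf k i j) ^+ 2
      = \sum_(j < n) (A i j k / (2 * Num.sqrt (w k i))) ^+ 2.
    apply: eq_bigr => j _; rewrite cfE exprMn.
    have -> : (if b then 1 else -1) ^+ 2 = 1 :> R by case: b; rewrite ?sqrrN expr1n.
    by rewrite mul1r.
  exact: (@csum R n (fun j => A i j k)).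
have pt : forall x : nat -> R, phi_A q A (fun i : 'I_n => x (val i))
    <= 2 * B `^ a + \sum_l beta l * expR (\sum_(j < n) c l j * x j).
  move=> x.
  pose y k i := \sum_(j < n) A i j k * x (val j).
  pose E k i := expR (y k i / (2 * Num.sqrt (w k i))) + expR (- (y k i / (2 * Num.sqrt (w k i)))).
  pose Phi := \sum_(k < m) (\sum_(i < n) y k i ^+ 4 / w k i) `^ r.
  have ephi : phi_A q A (fun i : 'I_n => x (val i)) = Phi `^ a.
    rewrite /phi_A /Phi /a; congr (_ `^ _); apply: eq_bigr => k _; congr (_ `^ _).
    rewrite big_mkcond; apply: eq_bigr => i _ /=; case: ifP => [_|]; first by [].
    by move=> /negbFE /eqP h; rewrite /w h invr0 mulr0.
  have Phi0 : 0 <= Phi by apply: sumr_ge0 => k _; exact: powR_ge0.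
  have hPhi : Phi <= B + \sum_(k < m) \sum_(i < n) (S k `^ r * w k i / S k) * K * E k i.
    rewrite /B -big_split; apply: ler_sum => k _.
    exact: (@perk R n (w k) (y k) r M r0 rM (w0 k)).
  rewrite ephi.
  have [Bz|Bp] := eqVneq B 0.
    have Sk0 : forall k, S k = 0.
      move=> k; apply: (@powR_eq0_eq0 _ _ r).
      have := @psumr_eq0P R _ xpredT (fun k => S k `^ r) (fun k _ => powR_ge0 _ _) Bz k isT.
      by [].
    have Phiz : Phi = 0.
      apply/eqP; rewrite eq_le Phi0 andbT; apply: le_trans hPhi _.
      rewrite Bz add0r big1; first exact: lexx.
      move=> k _; rewrite big1; first by [].
      by move=> i _; rewrite Sk0 invr0 mulr0 !mul0r.
    rewrite Phiz powR0; last by rewrite gt_eqF.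
    apply: addr_ge0; first by apply: mulr_ge0; [by [] | exact: powR_ge0].
    by apply: sumr_ge0 => l _; apply: mulr_ge0; [exact: beta0 | exact: expR_ge0].
  have Bpos : 0 < B by rewrite lt_neqAle eq_sym Bp B0.
  have PB0 : 0 <= Phi / B by apply: divr_ge0.
  have e1 := @e1lem R Phi B a Phi0 Bpos a0 a1.
  apply: le_trans e1 _.
  have BaB0 : 0 <= B `^ a / B by apply: divr_ge0; [exact: powR_ge0 | exact: B0].
  apply: le_trans (_ : _ <= B `^ a + B `^ a / B * (B + \sum_(k < m) \sum_(i < n)
      (S k `^ r * w k i / S k) * K * E k i)) _.
    by rewrite lerD2l; apply: ler_wpM2l.
  rewrite mulrDr (divfK Bp) addrA -mulr2n mulr_natl lerD2l.
  rewrite (@sum3 R m n (fun l => beta l * expR (\sum_(j < n) c l j * x j))).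
  rewrite mulr_sumr; apply: ler_sum => k _; rewrite mulr_sumr; apply: ler_sum => i _.
  have ep : \sum_(j < n) c ((k, i), true) j * x j = y k i / (2 * Num.sqrt (w k i)).
    rewrite /c /= /y mulr_suml; apply: eq_bigr => j _; rewrite cfE mul1r.
    by rewrite mulrAC.
  have en : \sum_(j < n) c ((k, i), false) j * x j = - (y k i / (2 * Num.sqrt (w k i))).
    rewrite -ep -sumrN; apply: eq_bigr => j _; rewrite /c /=.
    by rewrite mulN1r mul1r mulNr.
  rewrite ep en /beta /E /=.
  exact: distr4.
rewrite sqW.
have Ba0 : 0 <= 2 * B `^ a by apply: mulr_ge0; [by [] | exact: powR_ge0].
apply: (@le_trans _ _ (sexp_expect n (fun x => (2 * B `^ a + \sum_l beta l * expR (\sum_(j < n) c l j * x j))%:E))).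
  apply: sexp_mono => x; first by rewrite lee_fin /phi_A powR_ge0.
  by rewrite lee_fin; exact: pt.
apply: le_trans (@sexp_bound R _ n (2 * B `^ a) beta c Ba0 beta0 c2) _.
rewrite lee_fin.
apply: (@le_trans _ _ (2 * B `^ a + \sum_l beta l * expR (2 * 4^-1))).
  rewrite lerD2l; apply: ler_sum => l _; apply: ler_wpM2l; first exact: beta0.
  rewrite ler_expR ler_pM2l; [exact: csum2 | by []].
rewrite -mulr_suml (@sum3 R m n beta).
have hk : forall k : 'I_m, \sum_(i < n) (beta ((k, i), true) + beta ((k, i), false))
    <= 2 * K * (B `^ a / B) * S k `^ r.
  move=> k; rewrite /beta /=.
  apply: (@sumb R n (B `^ a / B) (S k `^ r) K (w k)).
  - by apply: divr_ge0; [exact: powR_ge0 | exact: B0].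
  - exact: powR_ge0.
  - exact: K0.
  - exact: w0.
have hs : \sum_(k < m) \sum_(i < n) (beta ((k, i), true) + beta ((k, i), false))
    <= 2 * K * B `^ a.
  apply: le_trans (ler_sum _ (fun k _ => hk k)) _.
  rewrite -mulr_sumr -/B -(mulrA (2 * K)); apply: ler_wpM2l; first by apply: mulr_ge0.
  exact: uBle.
have e0 : 0 <= expR (2 * 4^-1 : R) by exact: expR_ge0.
have := ler_wpM2r e0 hs.
set X := \sum_(k < m) _; set Y := expR _.
move=> h; apply: le_trans (lerD (lexx (2 * B `^ a)) h) _.
exact: distr5.
Qed.
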